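(* Let $A\in\mathbb{R}^{n\times n}$ be Metzler, $J\in\mathbb{R}^{n\times n}$ nonnegative, $\bar T>0$, $d_h\in\mathbb{N}$, $\varepsilon>0$ and $\epsilon>0$. Assume there exist a polynomial vector $\zeta:\mathbb{R}\to\mathbb{R}^n$ of degree at most $d_h$ and vectors $\theta_{ij}\in\mathbb{R}^n$, for integers $i,j\ge0$ with $i+j\le d_h$, such that: (i) $\theta_{ij}\ge0$ for all such $i,j$; (ii) $\zeta(0)-\epsilon\mathbf{1}_n\ge0$; (iii) every component of the polynomial vector $-A^\top\zeta(\tau)+\dot\zeta(\tau)-\sum_{i+j\le d_h}\theta_{ij}\tau^i(\bar T-\tau)^j$, written in the monomial basis $1,\tau,\tau^2,\dots$, has only nonnegative coefficients; (iv) $-\zeta(\bar T)^\top J+\zeta(0)^\top-\varepsilon\mathbf{1}_n^\top\ge0$. Then $\zeta(\tau)^\top A-\dot\zeta(\tau)^\top\le0$ for all $\tau\in[0,\bar T]$, $\zeta(\bar T)^\top J-\zeta(0)^\top+\varepsilon\mathbf{1}_n^\top\le0$, and the impulsive system $\dot x=Ax$ ($t\ne t_k$), $x(t_k^+)=Jx(t_k)$ is asymptotically stable under constant dwell-time $\bar T$.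
   Context: A matrix is Metzler if its off-diagonal entries are nonnegative and nonnegative if all entries are. Vector inequalities are componentwise; $\mathbf{1}_n$ is the vector of ones. In the impulsive system $x(t^+)=\lim_{s\downarrow t}x(s)$, impulse times are strictly increasing, and constant dwell-time $\bar T$ means $t_{k+1}-t_k=\bar T$ for all $k$; asymptotic stability means global asymptotic stability of the zero solution. *)

(* Defs.v *)
From Stdlib Require Import Reals Lra.
Open Scope R_scope.

(* Vectors in R^n: functions nat -> R (only indices < n matter).
   Matrices in R^{n x n}: functions nat -> nat -> R, entry (row i, col j) = M i j. *)

Fixpoint sumR (n : nat) (f : nat -> R) : R :=
  match n with
  | O => 0
  | S m => sumR m f + f m
  end.

Definition Metzler (n : nat) (A : nat -> nat -> R) : Prop :=
  forall i j, (i < n)%nat -> (j < n)%nat -> i <> j -> 0 <= A i j.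

Definition nonneg_mx (n : nat) (J : nat -> nat -> R) : Prop :=
  forall i j, (i < n)%nat -> (j < n)%nat -> 0 <= J i j.

Definition mxv (n : nat) (M : nat -> nat -> R) (v : nat -> R) : nat -> R :=
  fun i => sumR n (fun l => M i l * v l).
(* (M^T v)_i = (v^T M)_i *)
Definition mxTv (n : nat) (M : nat -> nat -> R) (v : nat -> R) : nat -> R :=
  fun i => sumR n (fun l => M l i * v l).

(* Polynomial vector of degree <= d with coefficients c : c k i = coefficient
   of tau^k in component i. *)
Definition polyv (d : nat) (c : nat -> nat -> R) (tau : R) : nat -> R :=
  fun i => sumR (S d) (fun k => c k i * tau ^ k).
Definition dpolyv (d : nat) (c : nat -> nat -> R) (tau : R) : nat -> R :=
  fun i => sumR (S d) (fun k => INR k * c k i * tau ^ (k - 1)).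

Definition theta_sum (d : nat) (theta : nat -> nat -> nat -> R) (T tau : R)
  : nat -> R :=
  fun l => sumR (S d) (fun i => sumR (S (d - i))
             (fun j => theta i j l * tau ^ i * (T - tau) ^ j)).

(* norm on R^n (1-norm; all norms equivalent) *)
Definition vnorm (n : nat) (v : nat -> R) : R := sumR n (fun i => Rabs (v i)).

(* x : R -> R^n is a solution on [0, oo) of
     xdot = A x  (t <> t_k),   x(t_k^+) = J x(t_k),
   with initial condition x(0) = x(0^+) = x0 and impulse times t_k = k*T, k >= 1
   (constant dwell time T).  Convention: x is left-continuous at impulse times,
   i.e. x(t_k) = x(t_k^-). *)
Definition is_imp_solution (n : nat) (A J : nat -> nat -> R) (T : R)
  (x0 : nat -> R) (x : R -> nat -> R) : Prop :=
  (forall i, (i < n)%nat -> x 0 i = x0 i) /\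
  forall k : nat,
    let a := INR k * T in
    let b := INR (S k) * T in
    (forall t, a < t < b -> forall i, (i < n)%nat ->
        derivable_pt_lim (fun s => x s i) t (mxv n A (x t) i)) /\
    (forall i, (i < n)%nat ->
        limit1_in (fun s => x s i) (fun s => a < s < b) (x b i) b) /\
    (forall i, (i < n)%nat ->
        limit1_in (fun s => x s i) (fun s => a < s < b)
          (match k with O => x a i | S _ => mxv n J (x a) i end) a).

Definition imp_GAS (n : nat) (A J : nat -> nat -> R) (T : R) : Prop :=
  (forall e, 0 < e -> exists delta, 0 < delta /\
     forall x0 x, is_imp_solution n A J T x0 x -> vnorm n x0 < delta ->
       forall t, 0 <= t -> vnorm n (x t) < e) /\
  (forall x0 x, is_imp_solution n A J T x0 x ->
     forall e, 0 < e -> exists T0, forall t, T0 <= t -> vnorm n (x t) < e).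

(* Main.v *)
Require Import Defs.
From Stdlib Require Import Reals Lra Lia FunctionalExtensionality Classical.
Open Scope R_scope.

Lemma sumR_ext m f g : (forall i, (i < m)%nat -> f i = g i) -> sumR m f = sumR m g.
Proof. induction m; simpl; intros H; auto. rewrite IHm by (intros; apply H; lia). rewrite H by lia; auto. Qed.

Lemma sumR_le m f g : (forall i, (i < m)%nat -> f i <= g i) -> sumR m f <= sumR m g.
Proof. induction m; simpl; intros H; [lra|]. assert (H1 := IHm (fun i Hi => H i ltac:(lia))). assert (H2 := H m ltac:(lia)). lra. Qed.

Lemma sumR_nonneg m f : (forall i, (i < m)%nat -> 0 <= f i) -> 0 <= sumR m f.
Proof. induction m; simpl; intros H; [lra|]. assert (H1 := IHm (fun i Hi => H i ltac:(lia))). assert (H2 := H m ltac:(lia)). lra. Qed.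

Lemma sumR_plus m f g : sumR m (fun i => f i + g i) = sumR m f + sumR m g.
Proof. induction m; simpl; [lra|]. rewrite IHm; lra. Qed.

Lemma sumR_scal m c f : sumR m (fun i => c * f i) = c * sumR m f.
Proof. induction m; simpl; [lra|]. rewrite IHm; lra. Qed.

Lemma sumR_opp m f : sumR m (fun i => - f i) = - sumR m f.
Proof. induction m; simpl; [lra|]. rewrite IHm; lra. Qed.

Lemma sumR_swap m k (f : nat -> nat -> R) :
  sumR m (fun i => sumR k (fun j => f i j)) = sumR k (fun j => sumR m (fun i => f i j)).
Proof. induction m; simpl.
 - induction k; simpl; auto. rewrite <- IHk; lra.
 - rewrite IHm. rewrite <- sumR_plus. auto. Qed.

Lemma sumR_ge_term m f i : (i < m)%nat -> (forall j, (j < m)%nat -> j <> i -> 0 <= f j) -> f i <= sumR m f.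
Proof. induction m; simpl; intros Hi H; [lia|].
 destruct (Nat.eq_dec i m) as [->|Hne].
 - assert (0 <= sumR m f). { apply sumR_nonneg; intros; apply H; lia. } lra.
 - assert (f i <= sumR m f) by (apply IHm; [lia| intros; apply H; lia]).
   assert (0 <= f m) by (apply H; lia). lra. Qed.

Lemma Rabs_sumR m f : Rabs (sumR m f) <= sumR m (fun i => Rabs (f i)).
Proof. induction m; simpl. rewrite Rabs_R0; lra.
 eapply Rle_trans. apply Rabs_triang. lra. Qed.

Lemma dpl_ext f g x l l' : (forall y, f y = g y) -> l = l' -> derivable_pt_lim f x l -> derivable_pt_lim g x l'.
Proof. intros H <-. replace g with f; auto. extensionality y; auto. Qed.

Lemma dpl_sum m (f : nat -> R -> R) f' x :
  (forall i, (i < m)%nat -> derivable_pt_lim (f i) x (f' i)) ->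
  derivable_pt_lim (fun y => sumR m (fun i => f i y)) x (sumR m f').
Proof. induction m; simpl; intros H.
 - apply dpl_ext with (fct_cte 0) 0; auto. apply derivable_pt_lim_const.
 - apply dpl_ext with ((fun y => sumR m (fun i => f i y)) + f m)%F (sumR m f' + f' m); auto.
   apply derivable_pt_lim_plus; auto. Qed.

Lemma dpl_polyv d c i t : derivable_pt_lim (fun s => polyv d c s i) t (dpolyv d c t i).
Proof. unfold polyv, dpolyv. apply dpl_sum. intros k _.
 apply dpl_ext with (mult_real_fct (c k i) (fun y => y ^ k)) (c k i * (INR k * t ^ Init.Nat.pred k)).
 intros; reflexivity. rewrite Nat.sub_1_r; ring. apply derivable_pt_lim_scal. apply derivable_pt_lim_pow. Qed.

Lemma dpl_polyv_rev d c i b t : derivable_pt_lim (fun s => polyv d c (b - s) i) t (- dpolyv d c (b - t) i).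
Proof. assert (H1 : derivable_pt_lim (fun s => b - s) t (-1)).
 { apply dpl_ext with (fct_cte b - id)%F (0 - 1). intros; reflexivity. ring.
   apply derivable_pt_lim_minus. apply derivable_pt_lim_const. apply derivable_pt_lim_id. }
 assert (H := derivable_pt_lim_comp _ _ _ _ _ H1 (dpl_polyv d c i (b - t))).
 eapply dpl_ext; [| | exact H]. intros; reflexivity. ring. Qed.

Lemma part1 n A T dh z theta
  (H1 : forall i j l, (i + j <= dh)%nat -> (l < n)%nat -> 0 <= theta i j l)
  (H3 : exists p : nat -> nat -> R,
        (forall k l, (l < n)%nat -> 0 <= p k l) /\
        forall tau l, (l < n)%nat ->
          - mxTv n A (polyv dh z tau) l + dpolyv dh z tau l
            - theta_sum dh theta T tau l
          = sumR (S dh) (fun k => p k l * tau ^ k)) :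
  forall tau, 0 <= tau <= T -> forall l, (l < n)%nat ->
     mxTv n A (polyv dh z tau) l - dpolyv dh z tau l <= 0.
Proof.
  intros tau Ht l Hl. destruct H3 as [p [Hp Heq]]. specialize (Heq tau l Hl).
  assert (0 <= theta_sum dh theta T tau l).
  { unfold theta_sum. apply sumR_nonneg; intros i Hi. apply sumR_nonneg; intros j Hj.
    apply Rmult_le_pos; [apply Rmult_le_pos|]. apply H1; auto; lia.
    apply pow_le; lra. apply pow_le; lra. }
  assert (0 <= sumR (S dh) (fun k => p k l * tau ^ k)).
  { apply sumR_nonneg; intros k _. apply Rmult_le_pos; auto. apply pow_le; lra. }
  lra.
Qed.

Definition cA n (A : nat -> nat -> R) := sumR n (fun i => Rabs (A i i)).

Lemma cA_ge n A i : (i < n)%nat -> - cA n A <= A i i.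
Proof. intros Hi. assert (Rabs (A i i) <= cA n A).
 { unfold cA. apply (sumR_ge_term n (fun i => Rabs (A i i))); auto. intros; apply Rabs_pos. }
 assert (- Rabs (A i i) <= A i i) by (apply Rabs_le_cases' || (pose proof (Rabs_pos (A i i)); destruct (Rcase_abs (A i i)); [rewrite Rabs_left|rewrite Rabs_right]; lra)).
 lra. Qed.

Lemma mono n A T dh z eps (HA : Metzler n A)
  (Hp1 : forall tau, 0 <= tau <= T -> forall l, (l < n)%nat ->
     mxTv n A (polyv dh z tau) l <= dpolyv dh z tau l)
  (H2 : forall l, (l < n)%nat -> 0 <= polyv dh z 0 l - eps) :
  forall tau, 0 <= tau <= T -> (forall s, 0 <= s < tau -> forall i, (i < n)%nat -> 0 < polyv dh z s i) ->
  forall i, (i < n)%nat -> eps * exp (- (cA n A * tau)) <= polyv dh z tau i.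
Proof.
  intros tau Ht Hpos i Hi. set (c := cA n A).
  assert (Hc : 0 <= c). { unfold c, cA. apply sumR_nonneg; intros; apply Rabs_pos. }
  set (u := fun s => exp (c * s) * polyv dh z s i).
  set (u' := fun s => exp (c * s) * (c * polyv dh z s i + dpolyv dh z s i)).
  assert (Hd : forall s, derivable_pt_lim u s (u' s)).
  { intros s. assert (He : derivable_pt_lim (fun s => exp (c * s)) s (exp (c * s) * c)).
    { assert (Hl : derivable_pt_lim (fun s => c * s) s c).
      { apply dpl_ext with (mult_real_fct c id) (c * 1). intros; reflexivity. ring.
        apply derivable_pt_lim_scal, derivable_pt_lim_id. }
      exact (derivable_pt_lim_comp _ _ _ _ _ Hl (derivable_pt_lim_exp (c * s))). }
    assert (H := derivable_pt_lim_mult _ _ _ _ _ He (dpl_polyv dh z i s)).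
    eapply dpl_ext; [| | exact H]. intros; reflexivity. unfold u'; ring. }
  assert (Hu : u 0 <= u tau).
  { destruct (Req_dec tau 0) as [->|Hne]. lra.
    destruct (MVT_cor2 u u' 0 tau ltac:(lra) (fun c _ => Hd c)) as [c0 [Heq Hc0]].
    assert (0 <= u' c0).
    { unfold u'. apply Rmult_le_pos. apply Rlt_le, exp_pos.
      assert (Hz : forall j, (j < n)%nat -> 0 <= polyv dh z c0 j) by (intros; apply Rlt_le, Hpos; auto; lra).
      assert (mxTv n A (polyv dh z c0) i <= dpolyv dh z c0 i) by (apply Hp1; auto; lra).
      assert (A i i * polyv dh z c0 i <= mxTv n A (polyv dh z c0) i).
      { unfold mxTv. apply (sumR_ge_term n (fun l => A l i * polyv dh z c0 l)); auto.
        intros j Hj Hji. apply Rmult_le_pos; [apply HA; auto|auto]. }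
      assert (- c <= A i i) by (apply cA_ge; auto).
      specialize (Hz i Hi). nra. }
    nra. }
  unfold u in Hu. rewrite Rmult_0_r, exp_0, Rmult_1_l in Hu.
  specialize (H2 i Hi).
  assert (Hx : exp (- (c * tau)) * exp (c * tau) = 1) by (rewrite <- exp_plus; replace (- (c * tau) + c * tau) with 0 by ring; apply exp_0).
  assert (0 < exp (- (c * tau))) by apply exp_pos.
  apply Rle_trans with (exp (- (c * tau)) * (exp (c * tau) * polyv dh z tau i)).
  - rewrite Rmult_comm. apply Rmult_le_compat_l; lra.
  - rewrite <- Rmult_assoc, Hx; lra.
Qed.

Lemma fin_delta (n : nat) (P : nat -> R -> Prop) :
  (forall i d d', P i d -> 0 < d' <= d -> P i d') ->
  (forall i, (i < n)%nat -> exists d, 0 < d /\ P i d) ->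
  exists d, 0 < d /\ forall i, (i < n)%nat -> P i d.
Proof. intros Hm. induction n; intros H.
 - exists 1; split; [lra| intros; lia].
 - destruct IHn as [d1 [Hd1 P1]]. intros; apply H; lia.
   destruct (H n ltac:(lia)) as [d2 [Hd2 P2]].
   exists (Rmin d1 d2). split. apply Rmin_pos; auto.
   intros i Hi. destruct (Nat.eq_dec i n) as [->|].
   + apply Hm with d2; auto. split. apply Rmin_pos; auto. apply Rmin_r.
   + apply Hm with d1; auto. apply P1; lia. split. apply Rmin_pos; auto. apply Rmin_l.
Qed.

Lemma cont_polyv d c i x : continuity_pt (fun s => polyv d c s i) x.
Proof. apply derivable_continuous_pt. exists (dpolyv d c x i). apply dpl_polyv. Qed.

Lemma cont_pos f x : continuity_pt f x -> 0 < f x -> exists d, 0 < d /\ forall y, Rabs (y - x) < d -> 0 < f y.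
Proof. intros Hc Hf. destruct (Hc (f x) Hf) as [a [Ha H]]. exists a; split; auto.
 intros y Hy. destruct (Req_dec x y) as [<-|Hne]; auto.
 assert (H' := H y (conj (conj I Hne) Hy)). simpl in H'. unfold R_dist in H'.
 apply Rabs_def2 in H'. lra. Qed.

Lemma exp_le x y : x <= y -> exp x <= exp y.
Proof. intros H. destruct (Req_dec x y) as [->|]. lra. apply Rlt_le, exp_increasing; lra. Qed.

Lemma positivity n A T dh z eps (HA : Metzler n A) (HT : 0 < T) (Heps : 0 < eps)
  (Hp1 : forall tau, 0 <= tau <= T -> forall l, (l < n)%nat ->
     mxTv n A (polyv dh z tau) l <= dpolyv dh z tau l)
  (H2 : forall l, (l < n)%nat -> 0 <= polyv dh z 0 l - eps) :
  forall tau, 0 <= tau <= T -> forall i, (i < n)%nat -> eps * exp (- (cA n A * T)) <= polyv dh z tau i.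
Proof.
  set (E := fun t => 0 <= t <= T /\ forall s, 0 <= s <= t -> forall i, (i < n)%nat -> 0 < polyv dh z s i).
  assert (HE0 : E 0).
  { split. lra. intros s Hs i Hi. replace s with 0 by lra. specialize (H2 i Hi). lra. }
  assert (HB : bound E). { exists T. intros t [Ht _]. lra. }
  destruct (completeness E HB (ex_intro _ 0 HE0)) as [m [Hub Hlub]].
  assert (Hm0 : 0 <= m) by (apply Hub; auto).
  assert (HmT : m <= T). { apply Hlub. intros t [Ht _]. lra. }
  assert (HcA : 0 <= cA n A). { unfold cA. apply sumR_nonneg; intros; apply Rabs_pos. }
  assert (HA' : forall s, 0 <= s < m -> forall i, (i < n)%nat -> 0 < polyv dh z s i).
  { intros s Hs i Hi. destruct (classic (exists t, E t /\ s < t)) as [[t [[_ Ht] Hst]]|Hn].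
    - apply Ht; auto; lra.
    - exfalso. assert (m <= s). { apply Hlub. intros t Et. apply Rnot_lt_le. intros Hlt. apply Hn. eauto. }
      lra. }
  assert (HB' : forall i, (i < n)%nat -> 0 < polyv dh z m i).
  { intros i Hi. eapply Rlt_le_trans; [| apply (mono n A T dh z eps HA Hp1 H2 m ltac:(lra) HA' i Hi)].
    apply Rmult_lt_0_compat; auto. apply exp_pos. }
  assert (HmT' : m = T).
  { destruct (Req_dec m T) as [|Hne]; auto. exfalso.
    destruct (fin_delta n (fun i d => forall y, Rabs (y - m) < d -> 0 < polyv dh z y i)) as [d [Hd Hall]].
    { intros i d d' H [H' H''] y Hy. apply H. lra. }
    { intros i Hi. apply cont_pos. apply cont_polyv. auto. }
    set (t' := Rmin (m + d / 2) T).
    assert (E t').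
    { split. unfold t'. split. apply Rmin_glb; lra. apply Rmin_r.
      intros s Hs i Hi. destruct (Rlt_le_dec s m). apply HA'; auto; lra.
      apply Hall; auto. assert (t' <= m + d/2) by apply Rmin_l. rewrite Rabs_right; lra. }
    assert (Ht' : t' <= m) by (apply Hub; auto).
    assert (m < T) by (destruct (Rle_lt_or_eq_dec _ _ HmT); [auto|contradiction]). unfold t' in *. revert Ht'. unfold Rmin. destruct Rle_dec; intros; lra. }
  intros tau Ht i Hi.
  assert (HH : forall s, 0 <= s < tau -> forall i, (i < n)%nat -> 0 < polyv dh z s i).
  { intros; apply HA'; auto; lra. }
  eapply Rle_trans; [| apply (mono n A T dh z eps HA Hp1 H2 tau Ht HH i Hi)].
  apply Rmult_le_compat_l. lra.
  assert (cA n A * tau <= cA n A * T) by (apply Rmult_le_compat_l; lra).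
  apply exp_le. lra.
Qed.

Lemma sqrt_facts x d : 0 < d -> let S := sqrt (x * x + d * d) in
  S * S = x * x + d * d /\ d <= S /\ Rabs x <= S /\ 0 < S /\ S <= Rabs x + d.
Proof. intros Hd S. assert (H0 : 0 <= x * x + d * d) by nra.
 assert (HS : S * S = x * x + d * d) by (apply sqrt_sqrt; auto).
 assert (HS0 : 0 <= S) by apply sqrt_pos.
 assert (Hax : Rabs x * Rabs x = x * x) by (rewrite <- Rabs_mult; apply Rabs_right; nra).
 pose proof (Rabs_pos x).
 split; auto. split; [nra|]. split; [nra|]. split; nra. Qed.

Lemma term_bound a xi xj d : 0 < d -> (xi = xj \/ 0 <= a) ->
  a * xj * xi / sqrt (xi * xi + d * d) <= a * sqrt (xj * xj + d * d) + Rabs a * d.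
Proof. intros Hd Hc.
 destruct (sqrt_facts xi d Hd) as [Si2 [Sid [Six [Si0 _]]]].
 destruct (sqrt_facts xj d Hd) as [Sj2 [Sjd [Sjx [Sj0 _]]]].
 set (Si := sqrt (xi * xi + d * d)) in *. set (Sj := sqrt (xj * xj + d * d)) in *.
 unfold Rdiv. destruct Hc as [<- | Ha].
 - fold Si in Sj2, Sjd, Sjx, Sj0 |- *. 
   replace (a * xi * xi * / Si) with (a * Si - a * d * (d / Si)) by (assert (E: xi*xi = Si*Si - d*d) by lra;
        replace (a*xi*xi) with (a*(Si*Si - d*d)) by (rewrite <- E; ring); field; lra).
   assert (0 < d / Si <= 1). { split. apply Rdiv_lt_0_compat; lra. apply (Rmult_le_reg_r Si); auto. unfold Rdiv; rewrite Rmult_assoc, Rinv_l by lra. lra. }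
   assert (- (a * d * (d / Si)) <= Rabs a * d).
   { set (r := d / Si) in *. destruct (Rcase_abs a).
     - rewrite Rabs_left by auto. assert (0 <= -a*d) by nra.
       assert ((-a*d) * r <= (-a*d) * 1) by (apply Rmult_le_compat_l; lra). lra.
     - rewrite Rabs_right by auto. assert (0 <= a*d) by nra.
       assert (0 <= (a*d) * r) by (apply Rmult_le_pos; lra). lra. }
   assert (HSS : Sj = Si) by (unfold Sj, Si; reflexivity). rewrite HSS. lra.
 - assert (xj * xi * / Si <= Sj).
   { assert (Hle : xj * xi <= Rabs xj * Rabs xi) by (rewrite <- Rabs_mult; apply Rle_abs).
     assert (Rabs xj * Rabs xi * / Si <= Rabs xj).
     { pose proof (Rabs_pos xj). assert (Rabs xi * / Si <= 1).
       { apply (Rmult_le_reg_r Si); auto. rewrite Rmult_assoc, Rinv_l by lra. lra. }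
       nra. }
     assert (0 < / Si) by (apply Rinv_0_lt_compat; auto). nra. }
   rewrite Rabs_right by lra. nra.
Qed.

Lemma polyv_bound d c i T tau : 0 <= tau <= T ->
  polyv d c tau i <= sumR (S d) (fun k => Rabs (c k i) * (1 + T) ^ k).
Proof. intros Ht. eapply Rle_trans. apply Rle_abs. eapply Rle_trans. apply Rabs_sumR.
 apply sumR_le. intros k _. rewrite Rabs_mult. apply Rmult_le_compat_l. apply Rabs_pos.
 rewrite <- RPow_abs. apply pow_incr. split. apply Rabs_pos. rewrite Rabs_right; lra. Qed.

Lemma eps_le a b C : (forall d, 0 < d -> a <= b + d * C) -> a <= b.
Proof. intros H. apply Rnot_lt_le. intros Hlt.
 set (d := (a - b) / (2 * (Rabs C + 1))).
 assert (HC : 0 < Rabs C + 1) by (pose proof (Rabs_pos C); lra).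
 assert (Hd : 0 < d) by (unfold d; apply Rdiv_lt_0_compat; lra).
 specialize (H d Hd). assert (d * C <= d * Rabs C) by (apply Rmult_le_compat_l; [lra| apply Rle_abs]).
 assert (d * (Rabs C + 1) = (a - b) / 2) by (unfold d; field; lra).
 lra. Qed.

Definition Vfun n dh z b (x : R -> nat -> R) tau := sumR n (fun i => polyv dh z (b - tau) i * Rabs (x tau i)).

Lemma flow n A dh z T a b (x : R -> nat -> R) (HA : Metzler n A) (Hba : b - a = T)
  (Hp1 : forall tau, 0 <= tau <= T -> forall l, (l < n)%nat ->
     mxTv n A (polyv dh z tau) l <= dpolyv dh z tau l)
  (Hz : forall tau, 0 <= tau <= T -> forall i, (i < n)%nat -> 0 <= polyv dh z tau i)
  (Hder : forall t, a < t < b -> forall i, (i < n)%nat ->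
        derivable_pt_lim (fun s => x s i) t (mxv n A (x t) i)) :
  forall s t, a < s -> s < t -> t < b -> Vfun n dh z b x t <= Vfun n dh z b x s.
Proof.
  intros s t Hs1 Hs2 Hs3.
  set (Z := fun i => sumR (S dh) (fun k => Rabs (z k i) * (1 + T) ^ k)).
  set (Rr := fun i => sumR n (fun j => Rabs (A i j))).
  set (K := sumR n (fun i => Z i * Rr i)).
  apply eps_le with (K * (t - s) + sumR n (fun i => polyv dh z (b - s) i)).
  intros d Hd.
  set (Sq := fun tau i => sqrt (x tau i * x tau i + d * d)).
  set (Vd := fun tau => sumR n (fun i => polyv dh z (b - tau) i * Sq tau i)).
  set (Vd' := fun tau => sumR n (fun i => (- dpolyv dh z (b - tau) i) * Sq tau i +
      polyv dh z (b - tau) i * (/ (2 * Sq tau i) * (mxv n A (x tau) i * x tau i + x tau i * mxv n A (x tau) i)))).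
  assert (Hdv : forall c, s <= c <= t -> derivable_pt_lim Vd c (Vd' c)).
  { intros c Hc. unfold Vd, Vd'. apply dpl_sum. intros i Hi.
    assert (Hxi := Hder c ltac:(lra) i Hi).
    assert (Hq : derivable_pt_lim (fun tau => x tau i * x tau i + d * d) c
                   (mxv n A (x c) i * x c i + x c i * mxv n A (x c) i)).
    { apply dpl_ext with (((fun tau => x tau i) * (fun tau => x tau i)) + fct_cte (d * d))%F
        ((mxv n A (x c) i * x c i + x c i * mxv n A (x c) i) + 0). intros; reflexivity. ring.
      apply derivable_pt_lim_plus. apply derivable_pt_lim_mult; auto. apply derivable_pt_lim_const. }
    assert (Hpos : 0 < x c i * x c i + d * d) by nra.
    assert (Hs := derivable_pt_lim_comp _ _ _ _ _ Hq (derivable_pt_lim_sqrt _ Hpos)).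
    assert (Hm := derivable_pt_lim_mult _ _ _ _ _ (dpl_polyv_rev dh z i b c) Hs).
    eapply dpl_ext; [| | exact Hm]. intros; reflexivity. unfold Sq. reflexivity. }
  destruct (MVT_cor2 Vd Vd' s t ltac:(lra) Hdv) as [c [Heq Hc]].
  assert (Hbc : 0 <= b - c <= T) by lra.
  assert (Hw0 : forall i, (i < n)%nat -> 0 <= polyv dh z (b - c) i) by (intros; apply Hz; auto).
  assert (HwZ : forall i, (i < n)%nat -> polyv dh z (b - c) i <= Z i) by (intros; apply polyv_bound; auto).
  assert (HSf : forall tau i, let S := Sq tau i in
     S * S = x tau i * x tau i + d * d /\ d <= S /\ Rabs (x tau i) <= S /\ 0 < S /\ S <= Rabs (x tau i) + d)
    by (intros; apply sqrt_facts; auto).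
  assert (HVd' : Vd' c <= d * K).
  { unfold Vd'.
    apply Rle_trans with (sumR n (fun i => Sq c i * (mxTv n A (polyv dh z (b - c)) i - dpolyv dh z (b - c) i)
                                 + d * (Z i * Rr i))).
    - apply Rle_trans with (sumR n (fun i => (- dpolyv dh z (b - c) i) * Sq c i +
          polyv dh z (b - c) i * sumR n (fun j => A i j * Sq c j) + d * (Z i * Rr i))).
      + apply sumR_le. intros i Hi.
        destruct (HSf c i) as [_ [_ [_ [HS0 _]]]].
        assert (Hx : / (2 * Sq c i) * (mxv n A (x c) i * x c i + x c i * mxv n A (x c) i)
                  = sumR n (fun j => A i j * x c j * x c i / Sq c i)).
        { unfold mxv. 
          transitivity ((x c i / Sq c i) * sumR n (fun l => A i l * x c l)).
          field; lra. rewrite <- sumR_scal. apply sumR_ext; intros; unfold Rdiv; ring. }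
        rewrite Hx.
        assert (Hb : sumR n (fun j => A i j * x c j * x c i / Sq c i) <= sumR n (fun j => A i j * Sq c j) + d * Rr i).
        { unfold Rr. rewrite <- sumR_scal, <- sumR_plus. apply sumR_le. intros j Hj.
          unfold Sq. replace (d * Rabs (A i j)) with (Rabs (A i j) * d) by ring. apply term_bound; auto.
          destruct (Nat.eq_dec i j) as [->|]. auto. right. apply HA; auto. }
        assert (0 <= Rr i) by (unfold Rr; apply sumR_nonneg; intros; apply Rabs_pos).
        specialize (Hw0 i Hi). specialize (HwZ i Hi).
        assert (polyv dh z (b - c) i * (d * Rr i) <= Z i * (d * Rr i)) by (apply Rmult_le_compat_r; nra).
        assert (polyv dh z (b - c) i * sumR n (fun j => A i j * x c j * x c i / Sq c i) <=
                polyv dh z (b - c) i * (sumR n (fun j => A i j * Sq c j) + d * Rr i)) by (apply Rmult_le_compat_l; auto).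
        nra.
      + rewrite !sumR_plus. apply Rplus_le_compat_r.
        rewrite <- sumR_plus.
        apply Req_le. 
        transitivity (sumR n (fun i => (- dpolyv dh z (b - c) i) * Sq c i) +
                      sumR n (fun i => sumR n (fun j => A i j * polyv dh z (b - c) i * Sq c j))).
        { rewrite <- sumR_plus. apply sumR_ext; intros i Hi. rewrite <- sumR_scal. f_equal. apply sumR_ext; intros; ring. }
        rewrite sumR_swap, <- sumR_plus. apply sumR_ext; intros j Hj. unfold mxTv.
        rewrite Rmult_minus_distr_l, <- sumR_scal. unfold Rminus. rewrite Rplus_comm. f_equal.
        apply sumR_ext; intros; ring. ring.
    - rewrite sumR_plus. unfold K. rewrite <- sumR_scal.
      assert (sumR n (fun i => Sq c i * (mxTv n A (polyv dh z (b - c)) i - dpolyv dh z (b - c) i)) <= 0).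
      { apply Rle_trans with (sumR n (fun _ => 0)). apply sumR_le. intros i Hi.
        destruct (HSf c i) as [_ [_ [_ [HS0 _]]]].
        assert (mxTv n A (polyv dh z (b - c)) i - dpolyv dh z (b - c) i <= 0) by (assert (H := Hp1 _ Hbc i Hi); lra).
        nra. right. clear. induction n; simpl; auto. rewrite IHn; ring. }
      lra. }
  assert (H1 : Vfun n dh z b x t <= Vd t).
  { unfold Vfun, Vd. apply sumR_le. intros i Hi. apply Rmult_le_compat_l. apply Hz; [lra|auto].
    destruct (HSf t i) as [_ [_ [? _]]]. auto. }
  assert (H2 : Vd s <= Vfun n dh z b x s + d * sumR n (fun i => polyv dh z (b - s) i)).
  { unfold Vfun, Vd. rewrite <- sumR_scal, <- sumR_plus. apply sumR_le. intros i Hi.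
    destruct (HSf s i) as [_ [_ [_ [_ ?]]]].
    assert (0 <= polyv dh z (b - s) i) by (apply Hz; auto; lra). nra. }
  assert (Vd' c * (t - s) <= d * K * (t - s)) by (apply Rmult_le_compat_r; lra).
  lra.
Qed.

Lemma lim_abs f D l x0 : limit1_in f D l x0 -> limit1_in (fun s => Rabs (f s)) D (Rabs l) x0.
Proof. intros H e He. destruct (H e He) as [al [Hal Hf]]. exists al; split; auto.
 intros y Hy. specialize (Hf y Hy). simpl in *. unfold R_dist in *.
 eapply Rle_lt_trans; [apply Rabs_triang_inv2|]. auto. Qed.

Lemma lim_sum m (f : nat -> R -> R) l D x0 :
  (forall i, (i < m)%nat -> limit1_in (f i) D (l i) x0) ->
  limit1_in (fun s => sumR m (fun i => f i s)) D (sumR m l) x0.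
Proof. induction m; simpl; intros H.
 - intros e He. exists 1; split; [lra|]. intros. simpl. unfold R_dist. rewrite Rminus_diag, Rabs_R0; lra.
 - apply limit_plus. apply IHm; intros; apply H; lia. apply H; lia. Qed.

Lemma lim_cont f D x0 : continuity_pt f x0 -> (forall y, D y -> y <> x0) -> limit1_in f D (f x0) x0.
Proof. intros Hc HD e He. destruct (Hc e He) as [al [Hal Hf]]. exists al; split; auto.
 intros y [Dy Hy]. apply Hf. split; auto. split; [exact I|]. intro E; symmetry in E; exact (HD y Dy E). Qed.

Lemma lim_ge_left f a b l t0 c : limit1_in f (fun s => a < s < b) l a -> a < t0 -> t0 <= b ->
  (forall s, a < s < t0 -> c <= f s) -> c <= l.
Proof. intros H Ht0 Htb Hc. apply Rnot_lt_le. intros Hlt.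
 destruct (H (c - l) ltac:(lra)) as [al [Hal Hf]].
 set (s := a + Rmin al (t0 - a) / 2).
 assert (0 < Rmin al (t0 - a)) by (apply Rmin_pos; lra).
 assert (Rmin al (t0 - a) <= al) by apply Rmin_l. assert (Rmin al (t0 - a) <= t0 - a) by apply Rmin_r.
 assert (Hs : a < s < t0) by (unfold s; lra).
 assert (Hd1 : a < s < b) by lra.
 assert (Hd2 : dist R_met s a < al) by (simpl; unfold R_dist; rewrite Rabs_right; unfold s; lra).
 specialize (Hf s (conj Hd1 Hd2)).
 simpl in Hf. unfold R_dist in Hf. apply Rabs_def2 in Hf. specialize (Hc s Hs). lra. Qed.

Lemma lim_le_right f a b l c : limit1_in f (fun s => a < s < b) l b -> a < b ->
  (forall s, a < s < b -> f s <= c) -> l <= c.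
Proof. intros H Hab Hc. apply Rnot_lt_le. intros Hlt.
 destruct (H (l - c) ltac:(lra)) as [al [Hal Hf]].
 set (s := b - Rmin al (b - a) / 2).
 assert (0 < Rmin al (b - a)) by (apply Rmin_pos; lra).
 assert (Rmin al (b - a) <= al) by apply Rmin_l. assert (Rmin al (b - a) <= b - a) by apply Rmin_r.
 assert (Hs : a < s < b) by (unfold s; lra).
 assert (Hd2 : dist R_met s b < al) by (simpl; unfold R_dist; rewrite Rabs_left; unfold s; lra).
 specialize (Hf s (conj Hs Hd2)).
 simpl in Hf. unfold R_dist in Hf. apply Rabs_def2 in Hf. specialize (Hc s Hs). lra. Qed.

Lemma cont_polyv_rev d c i b x : continuity_pt (fun s => polyv d c (b - s) i) x.
Proof. apply derivable_continuous_pt. exists (- dpolyv d c (b - x) i). apply dpl_polyv_rev. Qed.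

Lemma interval n A dh z T a b (x : R -> nat -> R) (y : nat -> R) (HA : Metzler n A) (Hba : b - a = T) (HT : 0 < T)
  (Hp1 : forall tau, 0 <= tau <= T -> forall l, (l < n)%nat ->
     mxTv n A (polyv dh z tau) l <= dpolyv dh z tau l)
  (Hz : forall tau, 0 <= tau <= T -> forall i, (i < n)%nat -> 0 <= polyv dh z tau i)
  (Hder : forall t, a < t < b -> forall i, (i < n)%nat ->
        derivable_pt_lim (fun s => x s i) t (mxv n A (x t) i))
  (Hlb : forall i, (i < n)%nat -> limit1_in (fun s => x s i) (fun s => a < s < b) (x b i) b)
  (Hla : forall i, (i < n)%nat -> limit1_in (fun s => x s i) (fun s => a < s < b) (y i) a) :
  (forall t, a < t < b -> Vfun n dh z b x t <= sumR n (fun i => polyv dh z T i * Rabs (y i))) /\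
  sumR n (fun i => polyv dh z 0 i * Rabs (x b i)) <= sumR n (fun i => polyv dh z T i * Rabs (y i)).
Proof.
  assert (HLa : limit1_in (Vfun n dh z b x) (fun s => a < s < b) (sumR n (fun i => polyv dh z T i * Rabs (y i))) a).
  { unfold Vfun. apply (lim_sum n (fun i s => polyv dh z (b - s) i * Rabs (x s i))).
    intros i Hi. apply limit_mul.
    - rewrite <- Hba. apply (lim_cont (fun s => polyv dh z (b - s) i)). apply cont_polyv_rev. intros; lra.
    - apply (lim_abs (fun s => x s i)). auto. }
  assert (HLb : limit1_in (Vfun n dh z b x) (fun s => a < s < b) (sumR n (fun i => polyv dh z 0 i * Rabs (x b i))) b).
  { unfold Vfun. apply (lim_sum n (fun i s => polyv dh z (b - s) i * Rabs (x s i))).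
    intros i Hi. apply limit_mul.
    - replace 0 with (b - b) by ring. apply (lim_cont (fun s => polyv dh z (b - s) i)). apply cont_polyv_rev. intros; lra.
    - apply (lim_abs (fun s => x s i)). auto. }
  assert (Hin : forall t, a < t < b -> Vfun n dh z b x t <= sumR n (fun i => polyv dh z T i * Rabs (y i))).
  { intros t Ht. apply (lim_ge_left (Vfun n dh z b x) a b _ t); auto; try lra.
    intros s Hs. apply (flow n A dh z T a b x HA Hba Hp1 Hz Hder); lra. }
  split; auto. apply (lim_le_right (Vfun n dh z b x) a b); auto; lra.
Qed.

Lemma vnorm_nonneg n v : 0 <= vnorm n v.
Proof. unfold vnorm. apply sumR_nonneg; intros; apply Rabs_pos. Qed.

Lemma div_nonneg a b : 0 <= a -> 0 < b -> 0 <= a / b.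
Proof. intros. unfold Rdiv; apply Rmult_le_pos; [auto| left; apply Rinv_0_lt_compat; auto]. Qed.

Lemma find_k T t : 0 < T -> 0 < t -> exists k, INR k * T < t <= INR (S k) * T.
Proof. intros HT Ht. destruct (INR_archimed T t HT) as [N HN].
 revert HN. induction N; intros HN.
 - simpl in HN. lra.
 - destruct (Rle_lt_dec t (INR N * T)).
   + destruct (Rle_lt_or_eq_dec _ _ r) as [Hlt|Heq].
     * apply IHN; lra.
     * destruct N. simpl in Heq. lra. exists N. rewrite Heq. split; [|lra].
       rewrite S_INR. lra.
   + exists N. lra.
Qed.

Lemma GAS_from n A J T (HT : 0 < T) m0 q M1 (Hm0 : 0 < m0) (Hq : 0 <= q < 1) (HM : 0 <= M1)
  (Hb : forall x0 x, is_imp_solution n A J T x0 x ->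
     vnorm n (x 0) = vnorm n x0 /\
     forall t k, INR k * T < t <= INR (S k) * T -> m0 * vnorm n (x t) <= q ^ k * (M1 * vnorm n x0)) :
  imp_GAS n A J T.
Proof.
  split.
  - intros e He. set (C := 1 + M1 / m0).
    assert (HC : 1 <= C) by (unfold C; assert (0 <= M1 / m0) by (apply div_nonneg; lra); lra).
    exists (e / C). split. apply Rdiv_lt_0_compat; lra.
    intros x0 x Hsol Hx0 t Ht. destruct (Hb x0 x Hsol) as [H0 Hk].
    assert (HeC : e / C <= e). { apply (Rmult_le_reg_r C); [lra|]. unfold Rdiv; rewrite Rmult_assoc, Rinv_l by lra. nra. }
    destruct (Rle_lt_or_eq_dec _ _ Ht) as [Ht'|<-]; [| lra].
    destruct (find_k T t HT Ht') as [k Hkk]. specialize (Hk t k Hkk).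
    assert (Hqk : 0 <= q ^ k <= 1) by (split; [apply pow_le; lra| rewrite <- (pow1 k); apply pow_incr; lra]).
    pose proof (vnorm_nonneg n x0). pose proof (vnorm_nonneg n (x t)).
    assert (q ^ k * (M1 * vnorm n x0) <= 1 * (M1 * vnorm n x0)) by (apply Rmult_le_compat_r; nra).
    assert (m0 * vnorm n (x t) <= M1 * vnorm n x0) by lra.
    assert (vnorm n (x t) <= M1 / m0 * vnorm n x0).
    { apply (Rmult_le_reg_l m0); auto. unfold Rdiv. replace (m0 * (M1 * / m0 * vnorm n x0)) with (M1 * vnorm n x0) by (field; lra). auto. }
    assert (0 <= M1 / m0) by (apply div_nonneg; lra).
    assert (M1 / m0 * vnorm n x0 <= M1 / m0 * (e / C)) by (apply Rmult_le_compat_l; lra).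
    assert (M1 / m0 * (e / C) < e).
    { unfold C in *. apply (Rmult_lt_reg_r (1 + M1 / m0)); [lra|].
      replace (M1 / m0 * (e / (1 + M1 / m0)) * (1 + M1 / m0)) with (M1 / m0 * e) by (field; lra). nra. }
    lra.
  - intros x0 x Hsol e He. destruct (Hb x0 x Hsol) as [H0 Hk].
    set (B := M1 * vnorm n x0 / m0).
    assert (HB : 0 <= B) by (unfold B; pose proof (vnorm_nonneg n x0); apply div_nonneg; nra).
    destruct (pow_lt_1_zero q ltac:(rewrite Rabs_right; lra) (e / (B + 1)) ltac:(apply Rdiv_lt_0_compat; lra)) as [N HN].
    exists (INR (S N) * T). intros t Ht.
    assert (Ht' : 0 < t) by (pose proof (pos_INR N); rewrite S_INR in Ht; nra).
    destruct (find_k T t HT Ht') as [k Hkk].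
    assert (HkN : (k >= N)%nat).
    { destruct (Nat.le_gt_cases N k); [lia|]. exfalso. assert (Hle : (S k <= N)%nat) by lia.
      apply le_INR in Hle. assert (INR (S k) * T <= INR N * T) by (apply Rmult_le_compat_r; lra).
      rewrite (S_INR N) in Ht. lra. }
    specialize (HN k HkN). rewrite Rabs_right in HN by (apply Rle_ge, pow_le; lra).
    specialize (Hk t k Hkk).
    assert (vnorm n (x t) <= q ^ k * B).
    { apply (Rmult_le_reg_l m0); auto. unfold B, Rdiv. replace (m0 * (q ^ k * (M1 * vnorm n x0 * / m0))) with (q ^ k * (M1 * vnorm n x0)) by (field; lra). auto. }
    assert (q ^ k * B <= e / (B + 1) * B) by (apply Rmult_le_compat_r; lra).
    assert (e / (B + 1) * B < e).
    { apply (Rmult_lt_reg_r (B + 1)); [lra|]. replace (e / (B + 1) * B * (B + 1)) with (e * B) by (field; lra). nra. }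
    lra.
Qed.

Theorem proposition7 (n : nat) (A J : nat -> nat -> R) (T : R) (dh : nat)
  (veps eps : R)
  (HA : Metzler n A) (HJ : nonneg_mx n J) (HT : 0 < T)
  (Hveps : 0 < veps) (Heps : 0 < eps)
  (z : nat -> nat -> R) (theta : nat -> nat -> nat -> R)
  (* (i) *)
  (H1 : forall i j l, (i + j <= dh)%nat -> (l < n)%nat -> 0 <= theta i j l)
  (* (ii) *)
  (H2 : forall l, (l < n)%nat -> 0 <= polyv dh z 0 l - eps)
  (* (iii): the polynomial vector has nonnegative monomial coefficients *)
  (H3 : exists p : nat -> nat -> R,
        (forall k l, (l < n)%nat -> 0 <= p k l) /\
        forall tau l, (l < n)%nat ->
          - mxTv n A (polyv dh z tau) l + dpolyv dh z tau l
            - theta_sum dh theta T tau l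
          = sumR (S dh) (fun k => p k l * tau ^ k))
  (* (iv) *)
  (H4 : forall l, (l < n)%nat ->
        0 <= - mxTv n J (polyv dh z T) l + polyv dh z 0 l - veps) :
  (forall tau, 0 <= tau <= T -> forall l, (l < n)%nat ->
     mxTv n A (polyv dh z tau) l - dpolyv dh z tau l <= 0) /\
  (forall l, (l < n)%nat ->
     mxTv n J (polyv dh z T) l - polyv dh z 0 l + veps <= 0) /\
  imp_GAS n A J T.
Proof.
  assert (HP1 := part1 n A T dh z theta H1 H3).
  split; [exact HP1|]. split. { intros l Hl. specialize (H4 l Hl). lra. }
  assert (Hp1 : forall tau, 0 <= tau <= T -> forall l, (l < n)%nat ->
     mxTv n A (polyv dh z tau) l <= dpolyv dh z tau l) by (intros tau Htau l Hl; assert (Hh := HP1 tau Htau l Hl); lra).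
  set (m0 := eps * exp (- (cA n A * T))).
  assert (Hm0 : 0 < m0) by (unfold m0; apply Rmult_lt_0_compat; [lra| apply exp_pos]).
  assert (Hlow : forall tau, 0 <= tau <= T -> forall i, (i < n)%nat -> m0 <= polyv dh z tau i)
    by (apply positivity; auto).
  assert (Hz : forall tau, 0 <= tau <= T -> forall i, (i < n)%nat -> 0 <= polyv dh z tau i)
    by (intros tau Htau i Hi; assert (Hh := Hlow tau Htau i Hi); lra).
  set (M0 := sumR n (fun i => polyv dh z 0 i) + veps).
  assert (HM00 : 0 <= sumR n (fun i => polyv dh z 0 i)) by (apply sumR_nonneg; intros; apply Hz; auto; lra).
  assert (HM0 : veps <= M0) by (unfold M0; lra).
  set (q := 1 - veps / M0).
  assert (Hq : 0 <= q < 1).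
  { unfold q. assert (0 < veps / M0) by (apply Rdiv_lt_0_compat; lra).
    assert (veps / M0 <= 1). { apply (Rmult_le_reg_r M0); [lra|]. unfold Rdiv; rewrite Rmult_assoc, Rinv_l by lra. lra. }
    lra. }
  set (M1 := sumR n (fun i => Rabs (polyv dh z T i))).
  assert (HM1 : 0 <= M1) by (apply sumR_nonneg; intros; apply Rabs_pos).
  apply (GAS_from n A J T HT m0 q M1 Hm0 Hq HM1).
  intros x0 x [Hx0 Hint].
  split. { unfold vnorm. apply sumR_ext. intros i Hi. rewrite Hx0; auto. }
  set (yk := fun k i => match k with O => x0 i | S _ => mxv n J (x (INR k * T)) i end).
  set (Vs := fun k => sumR n (fun i => polyv dh z T i * Rabs (yk k i))).
  assert (Hiv : forall k,
    (forall t, INR k * T < t < INR (S k) * T -> Vfun n dh z (INR (S k) * T) x t <= Vs k) /\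
    sumR n (fun i => polyv dh z 0 i * Rabs (x (INR (S k) * T) i)) <= Vs k).
  { intros k. pose proof (Hint k) as Hk. cbv zeta in Hk. destruct Hk as [Hd [Hlb Hla]].
    apply (interval n A dh z T (INR k * T) (INR (S k) * T) x (yk k) HA); auto.
    rewrite S_INR; ring.
    intros i Hi. specialize (Hla i Hi). destruct k.
    - simpl. simpl in Hla. replace (0 * T) with 0 in * by ring. rewrite <- (Hx0 i Hi). exact Hla.
    - exact Hla. }
  assert (P1 : forall t k, INR k * T < t <= INR (S k) * T -> m0 * vnorm n (x t) <= Vs k).
  { intros t k Ht. destruct (Hiv k) as [Ha Hb]. unfold vnorm. rewrite <- sumR_scal.
    destruct (Rle_lt_or_eq_dec _ _ (proj2 Ht)) as [Hlt|Heq].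
    - eapply Rle_trans; [| apply (Ha t); lra]. unfold Vfun. apply sumR_le. intros i Hi.
      apply Rmult_le_compat_r. apply Rabs_pos. apply Hlow; auto. rewrite S_INR in *. lra.
    - subst t. eapply Rle_trans; [| exact Hb]. apply sumR_le. intros i Hi.
      apply Rmult_le_compat_r. apply Rabs_pos. apply Hlow; auto. lra. }
  assert (P3 : Vs 0%nat <= M1 * vnorm n x0).
  { unfold Vs, vnorm. rewrite <- sumR_scal. apply sumR_le. intros i Hi. simpl.
    apply Rmult_le_compat_r. apply Rabs_pos. eapply Rle_trans. apply Rle_abs.
    unfold M1. apply (sumR_ge_term n (fun i => Rabs (polyv dh z T i))); auto. intros; apply Rabs_pos. }
  assert (P2 : forall k, Vs (S k) <= q * Vs k).
  { intros k. set (b := INR (S k) * T). set (P := sumR n (fun i => polyv dh z 0 i * Rabs (x b i))).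
    assert (HP : P <= Vs k) by apply (Hiv k).
    assert (Hs1 : Vs (S k) <= P - veps * vnorm n (x b)).
    { unfold Vs, P, vnorm. simpl yk. fold b.
      apply Rle_trans with (sumR n (fun i => polyv dh z T i * sumR n (fun l => J i l * Rabs (x b l)))).
      { apply sumR_le. intros i Hi. apply Rmult_le_compat_l. apply Hz; auto; lra.
        unfold mxv. eapply Rle_trans. apply Rabs_sumR. apply Req_le. apply sumR_ext. intros l Hl.
        rewrite Rabs_mult, (Rabs_right (J i l)); auto. apply Rle_ge, HJ; auto. }
      apply Rle_trans with (sumR n (fun l => Rabs (x b l) * mxTv n J (polyv dh z T) l)).
      { apply Req_le. transitivity (sumR n (fun i => sumR n (fun l => polyv dh z T i * J i l * Rabs (x b l)))).
        apply sumR_ext; intros i Hi. rewrite <- sumR_scal. apply sumR_ext; intros; ring.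
        rewrite sumR_swap. apply sumR_ext; intros l Hl. unfold mxTv. rewrite <- sumR_scal. apply sumR_ext; intros; ring. }
      rewrite <- sumR_scal. unfold Rminus. rewrite <- sumR_opp, <- sumR_plus. apply sumR_le. intros l Hl.
      specialize (H4 l Hl). pose proof (Rabs_pos (x b l)). nra. }
    assert (HPb : P <= M0 * vnorm n (x b)).
    { unfold P, vnorm. rewrite <- sumR_scal. apply sumR_le. intros i Hi. idtac.
      apply Rmult_le_compat_r. apply Rabs_pos.
      assert (polyv dh z 0 i <= sumR n (fun i => polyv dh z 0 i)).
      { apply (sumR_ge_term n (fun i => polyv dh z 0 i)); auto. intros; apply Hz; auto; lra. }
      unfold M0; lra. }
    assert (HM0p : 0 < M0) by lra.
    assert (veps / M0 * P <= veps * vnorm n (x b)).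
    { apply (Rmult_le_reg_l M0); auto. replace (M0 * (veps / M0 * P)) with (veps * P) by (field; lra). nra. }
    assert (Vs (S k) <= q * P) by (unfold q; lra).
    assert (q * P <= q * Vs k) by (apply Rmult_le_compat_l; lra).
    lra. }
  assert (Hind : forall k, Vs k <= q ^ k * (M1 * vnorm n x0)).
  { induction k. simpl. lra. simpl. specialize (P2 k). assert (q * Vs k <= q * (q ^ k * (M1 * vnorm n x0))) by (apply Rmult_le_compat_l; lra). lra. }
  intros t k Ht. eapply Rle_trans. apply P1; eauto. auto.
Qed.
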